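(* In the standard LLP setup, for all $s\in\Sigma^*$ and all $N,M\ge1$: $\overline{f^M_{cons}(s)}|_1\subseteq\overline{f^N_{optm}(s)}|_1$.
   Context: Standard LLP setup. $\Sigma=\Sigma_c\,\dot\cup\,\Sigma_{uc}$ is a finite alphabet partitioned into controllable and uncontrollable events. The plant $G$ has generated language $L(G)$ and marked language $L_m(G)$ with $L(G)=\overline{L_m(G)}$ ($\overline{M}$ = set of prefixes of strings in $M$). The legal language $K\subseteq L_m(G)$ satisfies $K=\overline{K}\cap L_m(G)$. For a prefix-closed $L$, $M$ is controllable w.r.t. $L$ if $\overline{M}\Sigma_{uc}\cap L\subseteq\overline{M}$. For a language $L$ and $s\in\Sigma^*$: $L/s=\{t: st\in L\}$; $L|_N=\{t\in L:|t|\le N\}$. $M^{\uparrow/s|_N}$ is the supremal sublanguage of $M$ controllable w.r.t. $L(G)/s|_N$. Conservative attitude: $f^N_{cons}(s)=[K/s|_{N-1}]^{\uparrow/s|_N}$; optimistic attitude: $f^N_{optm}(s)=[K/s|_N\cup(\overline{K}/s|_N\setminus\overline{K}/s|_{N-1})]^{\uparrow/s|_N}$. *)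

(* Defs.v *)
From mathcomp Require Import all_boot.
Set Implicit Arguments. Unset Strict Implicit. Unset Printing Implicit Defensive.

Definition lang (S : Type) := seq S -> Prop.

Definition subl (S : Type) (A B : lang S) : Prop := forall t, A t -> B t.

Definition pref (S : Type) (A : lang S) : lang S := fun t => exists u, A (t ++ u).

Definition quot (S : Type) (A : lang S) (s : seq S) : lang S := fun t => A (s ++ t).

Definition trunc (S : Type) (A : lang S) (N : nat) : lang S :=
  fun t => A t /\ size t <= N.

Definition lunion (S : Type) (A B : lang S) : lang S := fun t => A t \/ B t.
Definition ldiff (S : Type) (A B : lang S) : lang S := fun t => A t /\ ~ B t.

(* M is controllable w.r.t. (prefix-closed) L, uncontrollable events given by uc:
   \overline{M} Sigma_uc \cap L \subseteq \overline{M} *)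
Definition controllable (S : Type) (uc : pred S) (M L : lang S) : Prop :=
  forall t (e : S), pref M t -> uc e -> L (rcons t e) -> pref M (rcons t e).

Definition supC (S : Type) (uc : pred S) (M L : lang S) : lang S :=
  fun t => exists M' : lang S, [/\ subl M' M, controllable uc M' L & M' t].

(* L(G) = \overline{L_m(G)} ; Lm is the marked language of the plant *)
Definition f_cons (S : Type) (uc : pred S) (Lm K : lang S) (N : nat) (s : seq S)
  : lang S :=
  supC uc (trunc (quot K s) N.-1) (trunc (quot (pref Lm) s) N).

Definition f_optm (S : Type) (uc : pred S) (Lm K : lang S) (N : nat) (s : seq S)
  : lang S :=
  supC uc
    (lunion (trunc (quot K s) N)
            (ldiff (trunc (quot (pref K) s) N) (trunc (quot (pref K) s) N.-1)))
    (trunc (quot (pref Lm) s) N).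

(* Main.v *)
Require Import Defs.
From mathcomp Require Import all_boot.
From mathcomp Require Import zify.

Lemma cut (S : Type) (A : lang S) (N : nat) (w v : seq S) :
  A (w ++ v) -> size w <= N ->
  exists v', size (w ++ v') <= N /\ pref A (w ++ v') /\
             (size (w ++ v') = N \/ A (w ++ v')).
Proof.
move=> Hw Hs.
case: (leqP (size (w ++ v)) N) => Hle.
  exists v; split=> //; split; last by right.
  by exists [::]; rewrite cats0.
exists (take (N - size w) v).
have Hsz : size (w ++ take (N - size w) v) = N.
  rewrite size_cat size_take; move: Hle; rewrite size_cat.
  case: ifP => H; lia.
split; first by rewrite Hsz.
split; last by left.
exists (drop (N - size w) v); by rewrite -catA cat_take_drop.
Qed.

Theorem theorem7 (Sigma : finType) (uc : pred Sigma) (Lm K : lang Sigma)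
  (hKLm : subl K Lm) (hKclosed : forall t, K t <-> (pref K t /\ Lm t))
  (s : seq Sigma) (N M : nat) (hN : 1 <= N) (hM : 1 <= M) :
  subl (trunc (pref (f_cons uc Lm K M s)) 1)
       (trunc (pref (f_optm uc Lm K N s)) 1).
Proof.
move=> t [[u [M' [Hsub Hctl HMt]]] Ht1].
split=> //.
pose M'' : lang Sigma := fun w =>
  (M' w /\ size w <= N) \/ (pref M' w /\ size w = N).
have key : forall w v, M' (w ++ v) -> size w <= N -> pref M'' w.
  move=> w v Hwv Hs.
  have [v' [Hs' [Hp Hor]]] := @cut _ M' N w v Hwv Hs.
  exists v'; rewrite /M''.
  by case: Hor => H; [right | left].
have [HK HszM] := Hsub _ HMt.
have [u2 Hu2] : pref M'' t by apply: (key t u HMt); lia.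
exists u2; exists M''; split.
- move=> w [[Hw Hs] | [[v Hv] Hs]].
    have [Kw _] := Hsub _ Hw.
    by left; split.
  right; split.
    split; last by rewrite Hs.
    have [Kv _] := Hsub _ Hv.
    by exists v; rewrite /quot -catA.
  move=> [_ Hs2]; lia.
- move=> t' e [u' Hu'] He HL.
  have Hpt' : exists v, M' (t' ++ v) /\ size t' <= N /\ size t' < M.
    case: Hu' => [[Hw Hs] | [[v Hv] Hs]].
      have [_ Hsz] := Hsub _ Hw.
      exists u'; split=> //; move: Hs Hsz; rewrite size_cat; lia.
    have [_ Hsz] := Hsub _ Hv.
    exists (u' ++ v); rewrite catA; split=> //.
    move: Hs Hsz; rewrite !size_cat; lia.
  case: Hpt' => v [Hv [HsN HsM]].
  case: HL => HL HLs.
  have [w Hw] : pref M' (rcons t' e).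
    apply: (Hctl t' e) => //; first by exists v.
    split=> //; rewrite size_rcons; lia.
  exact: (key _ _ Hw).
- exact: Hu2.
Qed.
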